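(* Almost surely under the annealed law $\mathbb{P}$, $$\frac1t\,[Y]_t\longrightarrow \eta^2\qquad(t\to\infty),$$ where $([Y]_t)_{ij}=\sum_{0\le r<t}(Y^i_{r+1}-Y^i_r)(Y^j_{r+1}-Y^j_r)$ and $(\eta^2)_{ij}=\sum_{u\in\mathbb{Z}^n}(u_i-b_i)(u_j-b_j)\bar P(u)$.
   Context: Let $\mathbb{S}$ be a finite set and $\pi$ a probability measure on $\mathbb{S}$. The environment $\xi=\{\xi_t(x): x\in\mathbb{Z}^n, t\in\mathbb{Z}^+\}$ consists of i.i.d. $\mathbb{S}$-valued random variables with law $\pi$; $\Pi$ denotes its law. Let $P_0$ be a probability distribution on $\mathbb{Z}^n$ and $c:\mathbb{Z}^n\times\mathbb{S}\to\mathbb{R}$ such that: $0\le P_0(u)+c(u,s)\le 1$ for all $u,s$; $\sum_{u}c(u,s)=0$ for all $s$; $\sum_{s}c(u,s)\pi(s)=0$ for all $u$; $P_0$ and $c$ have bounded range; and there is $b^c\in\mathbb{R}^n$ with $\sum_u u\,c(u,s)=b^c$ for all $s$. Given $\xi$, $(X_t)$ is the Markov chain on $\mathbb{Z}^n$ (from a fixed starting point) with $\mathbb{P}(X_{t+1}=y\mid X_t=x,\xi)=P_0(y-x)+c(y-x,\xi_t(x))$; $\mathbb{P}_\xi$ denotes this quenched law and $\mathbb{P}=\int\mathbb{P}_\xi\,\Pi(d\xi)$ the annealed (joint) law. Let $\bar P(u)=P_0(u)+\sum_s\pi(s)c(u,s)$, $b^0=\sum_u uP_0(u)$, $b=b^0+b^c$,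 $Y_t=X_t-tb$. *)

(* Defs.v *)
From HB Require Import structures.
From mathcomp Require Import all_boot all_order all_algebra.
From mathcomp Require Import all_classical all_reals all_analysis.
Set Implicit Arguments. Unset Strict Implicit. Unset Printing Implicit Defensive.
Import Order.TTheory GRing.Theory Num.Theory.
Import numFieldNormedType.Exports.
Local Open Scope classical_set_scope.
Local Open Scope ring_scope.

Definition zcoord (n : nat) (u : 'rV[int]_n) (i : 'I_n) : int := u ord0 i.

(* Sum over all of Z^n of a finitely supported function (finite-support sum
   from fsbigop). *)
Definition sumZ (R : realType) (n : nat) (f : 'rV[int]_n -> R) : R :=
  \sum_(u \in [set: 'rV[int]_n]) f u.

Definition Pbar (R : realType) (S : finType) (n : nat) (pi : S -> R)
  (P0 : 'rV[int]_n -> R) (c : 'rV[int]_n -> S -> R) (u : 'rV[int]_n) : R :=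
  P0 u + \sum_(s : S) pi s * c u s.

Definition b0 (R : realType) (n : nat) (P0 : 'rV[int]_n -> R) (i : 'I_n) : R :=
  sumZ (fun u => (zcoord u i)%:~R * P0 u).

Definition eta2 (R : realType) (S : finType) (n : nat) (pi : S -> R)
  (P0 : 'rV[int]_n -> R) (c : 'rV[int]_n -> S -> R) (b : 'I_n -> R)
  (i j : 'I_n) : R :=
  sumZ (fun u => ((zcoord u i)%:~R - b i) * ((zcoord u j)%:~R - b j) * Pbar pi P0 c u).

Definition Ypath (R : realType) (n : nat) (x : nat -> 'rV[int]_n) (b : 'I_n -> R)
  (t : nat) (i : 'I_n) : R :=
  (zcoord (x t) i)%:~R - t%:R * b i.

Definition QV (R : realType) (n : nat) (x : nat -> 'rV[int]_n) (b : 'I_n -> R)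
  (t : nat) (i j : 'I_n) : R :=
  \sum_(r < t) ((Ypath x b r.+1 i - Ypath x b r i) * (Ypath x b r.+1 j - Ypath x b r j)).

(* The annealed (joint) law of the environment xi and the walk X:
   the environment values xi_t(x) are i.i.d. with law pi, and given xi the walk
   starts at x0 and moves from x at time r to y with probability
   P0(y-x) + c(y-x, xi_r(x)).  This is expressed through cylinder events: for
   every finite set B of space-time points, every configuration sigma on B and
   every path x_0..x_t whose space-time points (r, x_r), r < t, lie in B,
   P(xi = sigma on B, X_0 = x_0, ..., X_t = x_t)
     = [x_0 = x0] * prod_{p in B} pi(sigma p)
       * prod_{r<t} (P0(x_{r+1}-x_r) + c(x_{r+1}-x_r, sigma(r,x_r))).
   These cylinder events form a generating pi-system, so this determines the
   joint law. *)
Definition annealed_law (d : measure_display) (Omega : measurableType d)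
  (R : realType) (P : probability Omega R) (S : finType) (n : nat)
  (pi : S -> R) (P0 : 'rV[int]_n -> R) (c : 'rV[int]_n -> S -> R)
  (x0 : 'rV[int]_n)
  (xi : nat -> 'rV[int]_n -> Omega -> S) (X : nat -> Omega -> 'rV[int]_n) : Prop :=
  forall (B : seq (nat * 'rV[int]_n)) (sigma : nat * 'rV[int]_n -> S)
         (x : nat -> 'rV[int]_n) (t : nat),
    (forall r, (r < t)%N -> (r, x r) \in B) ->
    let E := [set w | (forall p, p \in B -> xi p.1 p.2 w = sigma p) /\
                      (forall r, (r <= t)%N -> X r w = x r)] in
    measurable E /\
    P E = ((x 0%N == x0)%:R * (\prod_(p <- undup B) pi (sigma p)) *
           \prod_(r < t) (P0 (x r.+1 - x r) + c (x r.+1 - x r) (sigma (r : nat, x r))))%:E.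

(* Main.v *)
Require Import Defs.
From HB Require Import structures.
From mathcomp Require Import all_boot all_order all_algebra.
From mathcomp Require Import all_classical all_reals all_analysis.
From mathcomp Require Import ring lra.
Import Order.TTheory GRing.Theory Num.Theory.
Import numFieldNormedType.Exports.
Local Open Scope classical_set_scope.
Local Open Scope ring_scope.
Set Implicit Arguments. Unset Strict Implicit. Unset Printing Implicit Defensive.
Fixpoint tuplesD (V : Type) (D : seq V) (t : nat) : seq (seq V) :=
  if t is t'.+1 then [seq u :: dl | u <- D, dl <- @tuplesD V D t'] else [:: [::]].

Definition Ex (R : realType) (V : Type) (D : seq V) (q : V -> R) (t : nat)
  (F : seq V -> R) : R :=
  \sum_(dl <- tuplesD D t) F dl * \prod_(u <- dl) q u.

Lemma Ex_S (R : realType) (V : Type) (D : seq V) (q : V -> R) t F :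
  Ex D q t.+1 F = \sum_(u <- D) q u * Ex D q t (fun dl => F (u :: dl)).
Proof.
rewrite /Ex /= big_allpairs_dep; apply: eq_bigr => u _.
rewrite mulr_sumr; apply: eq_bigr => dl _; rewrite big_cons; ring.
Qed.

Lemma Ex_0 (R : realType) (V : Type) (D : seq V) (q : V -> R) F :
  Ex D q 0 F = F [::].
Proof. by rewrite /Ex /= big_seq1 big_nil mulr1. Qed.

Lemma Ex_ext (R : realType) (V : Type) (D : seq V) (q : V -> R) t F G :
  F =1 G -> Ex D q t F = Ex D q t G.
Proof. by move=> FG; apply: eq_bigr => dl _; rewrite FG. Qed.

Lemma Ex_le (R : realType) (V : Type) (D : seq V) (q : V -> R) t F G :
  (forall u, 0 <= q u) -> (forall dl, F dl <= G dl) -> Ex D q t F <= Ex D q t G.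
Proof.
move=> q0 FG; apply: ler_sum => dl _; apply: ler_wpM2r; last exact: FG.
by apply: prodr_ge0 => u _.
Qed.

Lemma Ex_ge0 (R : realType) (V : Type) (D : seq V) (q : V -> R) t F :
  (forall u, 0 <= q u) -> (forall dl, 0 <= F dl) -> 0 <= Ex D q t F.
Proof.
move=> q0 F0; apply: sumr_ge0 => dl _; apply: mulr_ge0 => //.
by apply: prodr_ge0 => u _.
Qed.

Definition Sm (R : realType) (V : Type) (h : V -> R) (dl : seq V) : R :=
  \sum_(u <- dl) h u.

Definition mom (R : realType) (V : Type) (D : seq V) (q h : V -> R) (k : nat) : R :=
  \sum_(u <- D) q u * h u ^+ k.

Lemma Ex_bin4 (R : realType) (V : Type) (D : seq V) (q : V -> R) t (S : seq V -> R) a :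
  Ex D q t (fun dl => (a + S dl) ^+ 4) =
  Ex D q t (fun dl => S dl ^+ 4) + 4 * a * Ex D q t (fun dl => S dl ^+ 3)
  + 6 * a ^+ 2 * Ex D q t (fun dl => S dl ^+ 2) + 4 * a ^+ 3 * Ex D q t S
  + a ^+ 4 * Ex D q t (fun _ => 1).
Proof. rewrite /Ex !mulr_sumr -!big_split; apply: eq_bigr => dl _ /=; ring. Qed.

Lemma Ex_bin3 (R : realType) (V : Type) (D : seq V) (q : V -> R) t (S : seq V -> R) a :
  Ex D q t (fun dl => (a + S dl) ^+ 3) =
  Ex D q t (fun dl => S dl ^+ 3) + 3 * a * Ex D q t (fun dl => S dl ^+ 2)
  + 3 * a ^+ 2 * Ex D q t S + a ^+ 3 * Ex D q t (fun _ => 1).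
Proof. rewrite /Ex !mulr_sumr -!big_split; apply: eq_bigr => dl _ /=; ring. Qed.

Lemma Ex_bin2 (R : realType) (V : Type) (D : seq V) (q : V -> R) t (S : seq V -> R) a :
  Ex D q t (fun dl => (a + S dl) ^+ 2) =
  Ex D q t (fun dl => S dl ^+ 2) + 2 * a * Ex D q t S + a ^+ 2 * Ex D q t (fun _ => 1).
Proof. rewrite /Ex !mulr_sumr -!big_split; apply: eq_bigr => dl _ /=; ring. Qed.

Lemma Ex_bin1 (R : realType) (V : Type) (D : seq V) (q : V -> R) t (S : seq V -> R) a :
  Ex D q t (fun dl => (a + S dl)) = Ex D q t S + a * Ex D q t (fun _ => 1).
Proof. rewrite /Ex !mulr_sumr -!big_split; apply: eq_bigr => dl _ /=; ring. Qed.

Lemma Ex_bin0 (R : realType) (V : Type) (D : seq V) (q : V -> R) t :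
  Ex D q t.+1 (fun _ => 1) = mom D q (fun=> 0) 0 * Ex D q t (fun _ => 1).
Proof.
rewrite Ex_S /mom mulr_suml; apply: eq_bigr => u _; rewrite expr0; ring.
Qed.

Lemma moments (R : realType) (V : Type) (D : seq V) (q h : V -> R) t :
  mom D q h 0 = 1 -> mom D q h 1 = 0 ->
  [/\ Ex D q t (fun _ => 1) = 1, Ex D q t (Sm h) = 0,
      Ex D q t (fun dl => Sm h dl ^+ 2) = t%:R * mom D q h 2,
      Ex D q t (fun dl => Sm h dl ^+ 3) = t%:R * mom D q h 3 &
      Ex D q t (fun dl => Sm h dl ^+ 4) =
        3 * t%:R * (t%:R - 1) * mom D q h 2 ^+ 2 + t%:R * mom D q h 4].
Proof.
move=> m0 m1; elim: t => [|t [E0 E1 E2 E3 E4]].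
  by rewrite !Ex_0 /Sm big_nil; split; ring.
have step : forall G : R -> R, Ex D q t.+1 (fun dl => G (Sm h dl)) =
    \sum_(u <- D) q u * Ex D q t (fun dl => G (h u + Sm h dl)).
  by move=> G; rewrite Ex_S; apply: eq_bigr => u _; congr (_ * _);
     apply: Ex_ext => dl; rewrite /Sm big_cons.
have HS : forall c0 c1 c2 c3 c4 : R,
    \sum_(u <- D) q u * (c0 + c1 * h u + c2 * h u ^+ 2 + c3 * h u ^+ 3 + c4 * h u ^+ 4)
    = c0 * mom D q h 0 + c1 * mom D q h 1 + c2 * mom D q h 2
      + c3 * mom D q h 3 + c4 * mom D q h 4.
  move=> c0 c1 c2 c3 c4.
  rewrite /mom !mulr_sumr -!big_split; apply: eq_bigr => u _ /=; ring.
split.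
- have := step (fun _ => 1); rewrite /= => ->.
  under eq_bigr do rewrite E0.
  rewrite (eq_bigr (fun u => q u * (1 + 0 * h u + 0 * h u ^+ 2 + 0 * h u ^+ 3 + 0 * h u ^+ 4))).
    by rewrite HS m0 m1; ring.
  by move=> u _; ring.
- have := step id; rewrite /= => ->.
  under eq_bigr do rewrite Ex_bin1 E0 E1.
  rewrite (eq_bigr (fun u => q u * (0 + 1 * h u + 0 * h u ^+ 2 + 0 * h u ^+ 3 + 0 * h u ^+ 4))).
    by rewrite HS m0 m1; ring.
  by move=> u _; ring.
- have := step (fun x => x ^+ 2); rewrite /= => ->.
  under eq_bigr do rewrite Ex_bin2 E0 E1 E2.
  rewrite (eq_bigr (fun u => q u * (t%:R * mom D q h 2 + 0 * h u + 1 * h u ^+ 2 + 0 * h u ^+ 3 + 0 * h u ^+ 4))).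
    by rewrite HS m0 m1 -natr1; ring.
  by move=> u _; ring.
- have := step (fun x => x ^+ 3); rewrite /= => ->.
  under eq_bigr do rewrite Ex_bin3 E0 E1 E2 E3.
  rewrite (eq_bigr (fun u => q u * (t%:R * mom D q h 3 + 3 * t%:R * mom D q h 2 * h u + 0 * h u ^+ 2 + 1 * h u ^+ 3 + 0 * h u ^+ 4))).
    by rewrite HS m0 m1 -natr1; ring.
  by move=> u _; ring.
- have := step (fun x => x ^+ 4); rewrite /= => ->.
  under eq_bigr do rewrite Ex_bin4 E0 E1 E2 E3 E4.
  rewrite (eq_bigr (fun u => q u * ((3 * t%:R * (t%:R - 1) * mom D q h 2 ^+ 2 + t%:R * mom D q h 4) + 4 * t%:R * mom D q h 3 * h u + 6 * t%:R * mom D q h 2 * h u ^+ 2 + 0 * h u ^+ 3 + 1 * h u ^+ 4))).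
    by rewrite HS m0 m1 -natr1; ring.
  by move=> u _; ring.
Qed.

Lemma ExZr (R : realType) (V : Type) (D : seq V) (q : V -> R) t F c :
  Ex D q t (fun dl => F dl * c) = Ex D q t F * c.
Proof. rewrite /Ex mulr_suml; apply: eq_bigr => dl _; ring. Qed.

Lemma tail_bound (R : realType) (V : Type) (D : seq V) (q h : V -> R) t (a : R) :
  (forall u, 0 <= q u) -> mom D q h 0 = 1 -> mom D q h 1 = 0 -> 0 < a ->
  Ex D q t.+1 (fun dl => ((a ^+ 2 <= Sm h dl ^+ 2)%R : bool)%:R)
    <= (3 * mom D q h 2 ^+ 2 + mom D q h 4) * (t.+1%:R ^+ 2 / a ^+ 4).
Proof.
move=> q0 m0 m1 a0.
have a40 : 0 < a ^+ 4 by rewrite exprn_gt0.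
apply: (@le_trans _ _ (Ex D q t.+1 (fun dl => Sm h dl ^+ 4 * (a ^+ 4)^-1))).
  apply: Ex_le => // dl; have [H|H] := boolP (a ^+ 2 <= Sm h dl ^+ 2); last first.
    by apply: mulr_ge0; [rewrite exprn_even_ge0 | rewrite invr_ge0 ltW].
  rewrite /= ler_pdivlMr // mul1r.
  have -> : Sm h dl ^+ 4 = (Sm h dl ^+ 2) ^+ 2 by rewrite -exprM.
  have -> : a ^+ 4 = (a ^+ 2) ^+ 2 by rewrite -exprM.
  by rewrite !expr2; apply: ler_pM => //; rewrite -expr2 exprn_even_ge0.
rewrite ExZr; have EE := moments t.+1 m0 m1; case: EE => _ _ _ _ ->.
have m4 : 0 <= mom D q h 4.
  by apply: sumr_ge0 => u _; rewrite mulr_ge0 // exprn_even_ge0.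
have t1 : 1 <= t.+1%:R :> R by rewrite ler1n.
rewrite [X in _ <= X]mulrA ler_pM2r ?invr_gt0 //.
have m22 : 0 <= mom D q h 2 ^+ 2 by rewrite exprn_even_ge0.
move: m22 m4; generalize (mom D q h 2 ^+ 2) (mom D q h 4).
move=> x y hx hy.
have h1 : 0 <= x * t.+1%:R by apply: mulr_ge0 => //; lra.
have h2 : 0 <= y * (t.+1%:R * (t.+1%:R - 1)) by apply: mulr_ge0 => //; apply: mulr_ge0; lra.
rewrite -subr_ge0.
have -> : (3 * x + y) * t.+1%:R ^+ 2 - (3 * t.+1%:R * (t.+1%:R - 1) * x + t.+1%:R * y) = 3 * (x * t.+1%:R) + y * (t.+1%:R * (t.+1%:R - 1)) by ring.
lra.
Qed.

Lemma mem_tuplesD (V : eqType) (D : seq V) t dl :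
  (dl \in tuplesD D t) = (size dl == t) && all (mem D) dl.
Proof.
elim: t dl => [|t IH] [|u dl] //=.
all: try by rewrite inE.
- by apply/negbTE/allpairsPdep => -[x [y [_ _]]].
- apply/allpairsPdep/idP => [[x [y [xD yT [-> ->]]]]|/andP[sz /andP[uD aD]]].
    by move: yT; rewrite IH => /andP[/eqP -> ->]; rewrite eqxx xD.
  by exists u, dl; rewrite IH -eqSS sz aD.
Qed.

Lemma uniq_tuplesD (V : eqType) (D : seq V) t : uniq D -> uniq (tuplesD D t).
Proof.
move=> uD; elim: t => [|t IH] //=.
apply: allpairs_uniq => // -[x y] [x' y'] _ _ /= [-> ->] //.
Qed.

Lemma bigsetU_mem (T : Type) (I : eqType) (s : seq I) (P : pred I) (F : I -> set T) w :
  (\big[setU/set0]_(i <- s | P i) F i) w <-> exists i, i \in s /\ P i /\ F i w.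
Proof.
elim: s => [|i s IH]; first by rewrite big_nil; split => // -[? []].
rewrite big_cons; case: ifPn => Pi.
- split => [[Fi|/IH [j [sj [Pj Fj]]]]|[j [+ [Pj Fj]]]].
  + by exists i; rewrite mem_head.
  + by exists j; rewrite inE sj orbT.
  + by rewrite inE => /orP[/eqP Eji|sj]; [left; rewrite -Eji|right; apply/IH; exists j].
- rewrite IH; split => [[j [sj [Pj Fj]]]|[j [+ [Pj Fj]]]].
  + by exists j; rewrite inE sj orbT.
  + by rewrite inE => /orP[/eqP Eji|sj]; [rewrite -Eji Pj in Pi|exists j].
Qed.

Lemma measure_bigsetU_seq d (T : measurableType d) (R : realType)
  (mu : {measure set T -> \bar R}) (I : eqType) (s : seq I) (F : I -> set T) :
  uniq s -> (forall i, measurable (F i)) ->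
  (forall i j, i \in s -> j \in s -> i != j -> F i `&` F j = set0) ->
  mu (\big[setU/set0]_(i <- s) F i) = (\sum_(i <- s) mu (F i))%E.
Proof.
move=> + mF; elim: s => [|i s IH] /=; first by rewrite !big_nil measure0.
move=> /andP[nis us] dF; rewrite !big_cons measureU //.
- congr (_ + _)%E; apply: IH => // k l ks ls; apply: dF; rewrite inE ?ks ?ls orbT //.
- by apply: bigsetU_measurable.
- rewrite big_distrr /= big1_seq // => j /andP[_ js]; apply: dF.
  + exact: mem_head.
  + by rewrite inE js orbT.
  + by apply: contraNneq nis => ->.
Qed.

Definition incr (Omega : Type) (n : nat) (X : nat -> Omega -> 'rV[int]_n) (w : Omega) (t : nat)
  : seq 'rV[int]_n := [seq X r.+1 w - X r w | r <- iota 0 t].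

Definition Cyl (Omega : Type) (n : nat) (X : nat -> Omega -> 'rV[int]_n) (x0 : 'rV[int]_n)
  (dl : seq 'rV[int]_n) : set Omega :=
  [set w | X 0%N w = x0 /\ incr X w (size dl) = dl].

Fixpoint pth (n : nat) (x0 : 'rV[int]_n) (dl : seq 'rV[int]_n) (r : nat) : 'rV[int]_n :=
  if r is r'.+1 then pth x0 dl r' + nth 0 dl r' else x0.

Lemma Cyl_eq (Omega : Type) (n : nat) (X : nat -> Omega -> 'rV[int]_n) x0 dl :
  Cyl X x0 dl = [set w | forall r, (r <= size dl)%N -> X r w = pth x0 dl r].
Proof.
apply/seteqP; split => w /=.
- move=> [X0 Hi] r; elim: r => [|r IH] Hr //=.
  rewrite -IH ?(ltnW Hr) // -Hi /incr (nth_map 0%N) ?size_iota // nth_iota //.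
  by rewrite add0n addrC subrK.
- move=> H; split; first exact: (H 0%N).
  apply: (@eq_from_nth _ 0); first by rewrite size_map size_iota.
  move=> r; rewrite size_map size_iota => Hr.
  rewrite (nth_map 0%N) ?size_iota // nth_iota // add0n !H ?(ltnW Hr) //=.
  by rewrite addrC addKr.
Qed.

Lemma Cyl_disj (Omega : Type) (n : nat) (X : nat -> Omega -> 'rV[int]_n) x0 dl dl' :
  size dl = size dl' -> dl != dl' -> Cyl X x0 dl `&` Cyl X x0 dl' = set0.
Proof.
move=> sz neq; apply/seteqP; split => // w [[_ H1] [_ H2]].
by move: neq; rewrite -H1 -H2 sz eqxx.
Qed.

Lemma pth_diff (n : nat) (x0 : 'rV[int]_n) dl r :
  pth x0 dl r.+1 - pth x0 dl r = nth 0 dl r.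
Proof. by rewrite /= addrC addKr. Qed.

Lemma P_Cyl d (Omega : measurableType d) (R : realType) (P : probability Omega R)
  (S : finType) (n : nat) (pi : S -> R) (P0 : 'rV[int]_n -> R) (c : 'rV[int]_n -> S -> R)
  (x0 : 'rV[int]_n) (xi : nat -> 'rV[int]_n -> Omega -> S) (X : nat -> Omega -> 'rV[int]_n) :
  \sum_(s : S) pi s = 1 ->
  (forall u, \sum_(s : S) c u s * pi s = 0) ->
  annealed_law P pi P0 c x0 xi X ->
  forall dl, measurable (Cyl X x0 dl) /\ P (Cyl X x0 dl) = (\prod_(u <- dl) P0 u)%:E.
Proof.
move=> spi cpi HA dl.
have [s0 _] : exists s0 : S, True.
  case: (pickP (fun _ : S => true)) => [s0 _|H]; first by exists s0.
  by move: spi; rewrite big_pred0 // => /eqP; rewrite eq_sym oner_eq0.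
set t := size dl; set x := pth x0 dl.
set B := [seq (r, x r) | r <- iota 0 t].
pose sig (f : {ffun 'I_t -> S}) (p : nat * 'rV[int]_n) : S :=
  if insub p.1 is Some i then f i else s0.
have sigE : forall f (i : 'I_t) y, sig f (i : nat, y) = f i.
  move=> f i y; rewrite /sig /=; case: insubP => [j _ Hj|]; last by rewrite ltn_ord.
  by have -> : j = i by apply: val_inj.
have Hcov : forall r, (r < t)%N -> (r, x r) \in B.
  by move=> r Hr; apply: map_f; rewrite mem_iota.
pose E f := [set w | (forall p, p \in B -> xi p.1 p.2 w = sig f p) /\
                      (forall r, (r <= t)%N -> X r w = x r)].
have HE := fun f => HA B (sig f) x t Hcov.
have CylU : Cyl X x0 dl = \big[setU/set0]_(f <- enum {ffun 'I_t -> S}) E f.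
  rewrite Cyl_eq; apply/seteqP; split => w.
  - move=> Hw; apply/bigsetU_mem; exists [ffun i : 'I_t => xi (i : nat) (x i) w].
    split; first by rewrite mem_enum.
    split => //; split => // p /mapP [r]; rewrite mem_iota add0n => /andP[_ Hr] ->.
    by rewrite (sigE _ (Ordinal Hr)) ffunE.
  - by move/bigsetU_mem => [f [_ [_ [_ Hw]]]].
have mE : forall f, measurable (E f) by move=> f; case: (HE f).
have mC : measurable (Cyl X x0 dl).
  by rewrite CylU; apply: bigsetU_measurable => f _.
split => //.
rewrite CylU measure_bigsetU_seq //; last first.
  - move=> f g _ _ fg; apply/seteqP; split => // w [[Hf _] [Hg _]].
    have [i Hi] : exists i, f i != g i.
      apply/existsP; rewrite -negb_forall; apply: contra fg => /forallP H.
      by apply/eqP/ffunP => i; apply/eqP: (H i).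
    move: Hi; have Hp : (i : nat, x i) \in B by apply: Hcov.
    by rewrite -(sigE f i (x i)) -(sigE g i (x i)) -(Hf _ Hp) -(Hg _ Hp) eqxx.
  - exact: enum_uniq.
rewrite [LHS](eq_bigr _ (fun f _ => proj2 (HE f))).
rewrite sumEFin; congr (_%:E).
have x00 : x 0%N = x0 by [].
have uB : uniq B.
  apply: (@map_uniq _ _ fst); rewrite -map_comp /=.
  by rewrite (@eq_map _ _ _ id) // map_id iota_uniq.
have iotaE : iota 0 t = index_iota 0 t by rewrite /index_iota subn0.
transitivity (\sum_(f <- enum {ffun 'I_t -> S})
   \prod_(i < t) (pi (f i) * (P0 (nth 0 dl i) + c (nth 0 dl i) (f i)))).
  apply: eq_bigr => f _.
  rewrite x00 eqxx mul1r (undup_id uB) big_map iotaE big_mkord big_split /=.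
  congr (_ * _); apply: eq_bigr => i _; first by rewrite sigE.
  by rewrite sigE pth_diff.
rewrite big_enum /=.
rewrite (eq_bigl (fun _ => true)); last by move=> f; rewrite inE.
rewrite -(bigA_distr_bigA (fun (i : 'I_t) (s : S) => pi s * (P0 (nth 0 dl i) + c (nth 0 dl i) s))) /=.
rewrite (big_nth 0) big_mkord.
apply: eq_bigr => i _.
rewrite (eq_bigr (fun s => P0 (nth 0 dl i) * pi s + c (nth 0 dl i) s * pi s)); last first.
  by move=> s _; ring.
by rewrite big_split /= -mulr_sumr spi cpi mulr1 addr0.
Qed.

Lemma series_inv_sq (R : realType) (K : R) : 0 <= K ->
  (\sum_(0 <= t <oo) ((K / (t.+1%:R ^+ 2))%:E) < +oo)%E.
Proof.
move=> K0; apply: (@le_lt_trans _ _ (2 * K)%:E); last by rewrite ltry.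
apply: lime_le.
  apply: is_cvg_ereal_nneg_natsum => t _; rewrite lee_fin.
  by apply: divr_ge0 => //; rewrite exprn_even_ge0.
apply: nearW => N; rewrite sumEFin lee_fin.
suff : \sum_(0 <= t < N) K / t.+1%:R ^+ 2 <= 2 * K - 2 * K / N.+1%:R.
  move=> H; apply: (le_trans H); rewrite lerBlDr lerDl.
  by apply: divr_ge0 => //; apply: mulr_ge0.
elim: N => [|N IH]; first by rewrite big_geq // divr1 subrr.
rewrite big_nat_recr //=; apply: (le_trans (lerD IH (lexx _))).
have y1 : 1 <= N.+1%:R :> R by rewrite ler1n.
have -> : N.+2%:R = N.+1%:R + 1 :> R by rewrite -natr1.
have y0 : N.+1%:R != 0 :> R by rewrite pnatr_eq0.
have y10 : N.+1%:R + 1 != 0 :> R by rewrite natr1 pnatr_eq0.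
rewrite -subr_ge0.
have -> : 2 * K - 2 * K / (N.+1%:R + 1) - (2 * K - 2 * K / N.+1%:R + K / N.+1%:R ^+ 2)
          = K * (N.+1%:R - 1) / (N.+1%:R ^+ 2 * (N.+1%:R + 1)) :> R.
  field; have hN : (0:R) <= N%:R by [].
  by apply/andP; split; apply/negP => /eqP; lra.
apply: divr_ge0; first by apply: mulr_ge0 => //; lra.
by apply: mulr_ge0; [rewrite exprn_even_ge0 | lra].
Qed.

Lemma Ex_one (R : realType) (V : Type) (D : seq V) (q : V -> R) t :
  \sum_(u <- D) q u = 1 -> Ex D q t (fun _ => 1) = 1.
Proof.
move=> sq; elim: t => [|t IH]; first by rewrite Ex_0.
rewrite Ex_bin0 IH mulr1 /mom -[RHS]sq; apply: eq_bigr => u _; ring.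
Qed.

Definition Gset (Omega : Type) (n : nat) (X : nat -> Omega -> 'rV[int]_n) (x0 : 'rV[int]_n)
  (D : seq 'rV[int]_n) (t : nat) (Pr : pred (seq 'rV[int]_n)) : set Omega :=
  \big[setU/set0]_(dl <- tuplesD D t | Pr dl) Cyl X x0 dl.

Lemma P_G d (Omega : measurableType d) (R : realType) (P : probability Omega R)
  (n : nat) (P0 : 'rV[int]_n -> R) (x0 : 'rV[int]_n) (X : nat -> Omega -> 'rV[int]_n)
  (D : seq 'rV[int]_n) :
  uniq D ->
  (forall dl, measurable (Cyl X x0 dl) /\ P (Cyl X x0 dl) = (\prod_(u <- dl) P0 u)%:E) ->
  forall t Pr, measurable (Gset X x0 D t Pr) /\
    P (Gset X x0 D t Pr) = (Ex D P0 t (fun dl => (Pr dl : bool)%:R))%:E.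
Proof.
move=> uD HC t Pr; rewrite /Gset -big_filter; split.
  by apply: bigsetU_measurable => dl _; case: (HC dl).
rewrite measure_bigsetU_seq //.
- rewrite [LHS](eq_bigr _ (fun dl _ => proj2 (HC dl))) sumEFin big_filter /Ex.
  rewrite big_mkcond /=; congr (_%:E); apply: eq_bigr => dl _.
  by case: (Pr dl); rewrite ?mul1r ?mul0r.
- by rewrite filter_uniq // uniq_tuplesD.
- by move=> dl; case: (HC dl).
- move=> dl dl'; rewrite !mem_filter !mem_tuplesD.
  move=> /andP[_ /andP[/eqP s1 _]] /andP[_ /andP[/eqP s2 _]].
  move=> ne; apply: Cyl_disj ne; by rewrite s1 s2.
Qed.

Lemma G_mem (Omega : Type) (n : nat) (X : nat -> Omega -> 'rV[int]_n) x0 D t Pr w :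
  Gset X x0 D t xpredT w -> ~ Gset X x0 D t Pr w -> ~~ Pr (incr X w t).
Proof.
move=> /bigsetU_mem [dl [dlT [_ [X0 Hi]]]] HN; apply/negP => Hp; apply: HN.
apply/bigsetU_mem; exists dl; split => //.
move: dlT; rewrite mem_tuplesD => /andP[/eqP sz _].
by split; [rewrite -Hi sz | split].
Qed.

Lemma QV_sum (R : realType) (n : nat) (x : nat -> 'rV[int]_n) (b : 'I_n -> R) t i j :
  QV x b t i j = \sum_(u <- [seq x r.+1 - x r | r <- iota 0 t])
     (((zcoord u i)%:~R - b i) * ((zcoord u j)%:~R - b j)).
Proof.
have iotaE : iota 0 t = index_iota 0 t by rewrite /index_iota subn0.
rewrite big_map iotaE big_mkord /QV; apply: eq_bigr => r _.
rewrite /Ypath /zcoord !mxE !intrB -natr1; ring.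
Qed.

Theorem corollary3p4 (d : measure_display) (Omega : measurableType d)
  (R : realType) (P : probability Omega R) (S : finType) (n : nat)
  (pi : S -> R) (P0 : 'rV[int]_n -> R) (c : 'rV[int]_n -> S -> R)
  (bc : 'I_n -> R) (x0 : 'rV[int]_n)
  (xi : nat -> 'rV[int]_n -> Omega -> S) (X : nat -> Omega -> 'rV[int]_n) :
  (forall s, 0 <= pi s) -> \sum_(s : S) pi s = 1 ->
  (forall u, 0 <= P0 u) -> sumZ P0 = 1 ->
  (forall u s, 0 <= P0 u + c u s <= 1) ->
  (forall s, sumZ (fun u => c u s) = 0) ->
  (forall u, \sum_(s : S) c u s * pi s = 0) ->
  (exists M : nat, forall u : 'rV[int]_n,
      (exists i : 'I_n, (M < absz (zcoord u i))%N) -> P0 u = 0 /\ forall s, c u s = 0) ->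
  (forall s (i : 'I_n), sumZ (fun u => (zcoord u i)%:~R * c u s) = bc i) ->
  annealed_law P pi P0 c x0 xi X ->
  let b := fun i => b0 P0 i + bc i in
  {ae P, forall w, forall i j : 'I_n,
     (fun t : nat => QV (fun r => X r w) b t i j / t%:R) @ \oo -->
       eta2 pi P0 c b i j}.
Proof.
move=> pi0 spi P00 sP0 Pc1 csum cpi _ _ HA b.
pose D := finite_support 0 [set: 'rV[int]_n] P0.
have sD : \sum_(u <- D) P0 u = 1 by exact: sP0.
have uD : uniq D by exact: finite_support_uniq.
have HD : forall u, u \notin D -> P0 u = 0.
  move: sD; rewrite /D; case: finite_supportP => [_|Y _ HY _].
  - by rewrite big_nil => /eqP; rewrite eq_sym oner_eq0.
  - by move=> _ u; apply: HY.
have PbarE : forall u, Pbar pi P0 c u = P0 u.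
  move=> u; rewrite /Pbar (eq_bigr (fun s => c u s * pi s)) ?cpi ?addr0 //.
  by move=> s _; rewrite mulrC.
pose g i j (u : 'rV[int]_n) := ((zcoord u i)%:~R - b i) * ((zcoord u j)%:~R - b j).
have etaE : forall i j, eta2 pi P0 c b i j = \sum_(u <- D) g i j u * P0 u.
  move=> i j; rewrite /eta2 /sumZ (fsbigE D) //.
  - by rewrite big_mkcond /=; apply: eq_bigr => u _; rewrite in_setT PbarE.
  - by move=> u _ uD'; rewrite PbarE HD // mulr0.
pose eta i j := eta2 pi P0 c b i j.
pose h i j u := g i j u - eta i j.
have m0 : forall i j, mom D P0 (h i j) 0 = 1.
  by move=> i j; rewrite /mom -[RHS]sD; apply: eq_bigr => u _; rewrite expr0 mulr1.
have m1 : forall i j, mom D P0 (h i j) 1 = 0.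
  move=> i j; rewrite /mom (eq_bigr (fun u => g i j u * P0 u - eta i j * P0 u)).
    by rewrite sumrB -mulr_sumr sD mulr1 /eta etaE subrr.
  by move=> u _; rewrite /h; ring.
have HC := P_Cyl spi cpi HA.
have HG := P_G uD HC.
pose Gs t Pr := Gset X x0 D t Pr.
pose a (k t : nat) : R := t.+1%:R / k.+1%:R.
pose Bad i j k t := Gs t.+1 (fun dl => a k t ^+ 2 <= Sm (h i j) dl ^+ 2).
pose N1 := \bigcup_t ~` Gs t xpredT.
pose N2 := \bigcup_k \big[setU/set0]_(i <- enum 'I_n) \big[setU/set0]_(j <- enum 'I_n)
   lim_sup_set (Bad i j k).
have HN : P.-negligible (N1 `|` N2).
  apply: negligibleU.
  - apply: negligible_bigcup => t.
    have [mG PG] := HG t xpredT.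
    apply/negligibleP; first exact: measurableC.
    have H1 := probability_setC P mG.
    have E1 : Ex D P0 t (fun dl => (xpredT dl : bool)%:R) = 1.
      by transitivity (Ex D P0 t (fun _ => 1)); [apply: Ex_ext | exact: Ex_one].
    rewrite PG E1 subee // in H1.
  - apply: negligible_bigcup => k.
    elim/big_ind: _ => [|A B nA nB|i _]; [exact: negligible_set0|exact: negligibleU|].
    elim/big_ind: _ => [|A B nA nB|j _]; [exact: negligible_set0|exact: negligibleU|].
    have mB : forall t, measurable (Bad i j k t) by move=> t; case: (HG t.+1 (fun dl => a k t ^+ 2 <= Sm (h i j) dl ^+ 2)).
    have mL : measurable (lim_sup_set (Bad i j k)).
      by apply: bigcapT_measurable => m; apply: bigcup_measurable => l _; exact: mB.
    apply/negligibleP => //.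
    have H2 : P (lim_sup_set (Bad i j k)) = 0; last exact: H2.
    apply: lim_sup_set_cvg0 => //.
    pose C := 3 * mom D P0 (h i j) 2 ^+ 2 + mom D P0 (h i j) 4.
    have C0 : 0 <= C.
      apply: addr_ge0; first by apply: mulr_ge0 => //; rewrite exprn_even_ge0.
      by apply: sumr_ge0 => u _; rewrite mulr_ge0 // exprn_even_ge0.
    have K0 : 0 <= C * k.+1%:R ^+ 4 by apply: mulr_ge0 => //; rewrite exprn_ge0.
    apply: le_lt_trans (series_inv_sq K0).
    apply: lee_nneseries => [t _ _|t _]; first exact: measure_ge0.
    have [_ PB] := HG t.+1 (fun dl => a k t ^+ 2 <= Sm (h i j) dl ^+ 2).
    apply: (@le_trans _ _ (Ex D P0 t.+1
       (fun dl => ((a k t ^+ 2 <= Sm (h i j) dl ^+ 2)%R : bool)%:R))%:E).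
      by rewrite le_eqVlt; apply/orP; left; apply/eqP; exact: PB.
    rewrite lee_fin.
    have a0 : 0 < a k t by rewrite /a divr_gt0 // ltr0Sn.
    apply: le_trans (tail_bound t P00 (m0 i j) (m1 i j) a0) _.
    rewrite /a -/C le_eqVlt; apply/orP; left; apply/eqP.
    have t0 : t.+1%:R != 0 :> R by rewrite pnatr_eq0.
    have k0 : k.+1%:R != 0 :> R by rewrite pnatr_eq0.
    field; have ht : (0:R) <= t%:R by []; have hk : (0:R) <= k%:R by [].
    by apply/andP; split; apply/negP => /eqP; lra.
apply: negligibleS HN => w /= Hw.
have [//|Hn] := pselect ((N1 `|` N2) w).
exfalso; apply: Hw => i j.
have G1 : forall t, Gs t xpredT w.
  by move=> t; apply: contrapT => Hg; apply: Hn; left; exists t.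
have G2 : forall k, ~ lim_sup_set (Bad i j k) w.
  move=> k Hl; apply: Hn; right; exists k => //.
  apply/bigsetU_mem; exists i; split; first by rewrite mem_enum.
  split => //; apply/bigsetU_mem; exists j; split; first by rewrite mem_enum.
  by split.
apply/cvgrPdist_lt => e e0.
pose k := Num.Def.trunc e^-1.
have ke : k.+1%:R^-1 < e.
  have H := truncnS_gt (e^-1).
  by rewrite -[e]invrK ltf_pV2 ?posrE ?invr_gt0 ?ltr0Sn.
have [N HN] : exists N, forall t, (N <= t)%N -> ~ Bad i j k t w.
  apply: contrapT => Hc; apply: (G2 k) => m _.
  apply: contrapT => Hm; apply: Hc; exists m => t Ht Hb; apply: Hm.
  by exists t.
exists N.+1 => // -[//|t] /= Ht.
have nb := HN t Ht.
have := G_mem (G1 t.+1) nb; rewrite -ltNge => HS.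
have Hc : \sum_(u <- incr X w t.+1) eta i j = t.+1%:R * eta i j.
  have iotaE : iota 0 t.+1 = index_iota 0 t.+1 by rewrite /index_iota subn0.
  by rewrite /incr big_map iotaE sumr_const_nat subn0 mulr_natl.
have QVE : QV (fun r => X r w) b t.+1 i j = Sm (h i j) (incr X w t.+1) + t.+1%:R * eta i j.
  by rewrite QV_sum /Sm /h sumrB Hc subrK.
rewrite QVE.
have T0 : (0 : R) < t.+1%:R by rewrite ltr0Sn.
have a0 : 0 < a k t by rewrite /a divr_gt0 // ltr0Sn.
move: HS; rewrite /eta; move: (Sm (h i j) (incr X w t.+1)) => Sv HS.
have -> : eta2 pi P0 c b i j - (Sv + t.+1%:R * eta2 pi P0 c b i j) / t.+1%:R
          = - (Sv / t.+1%:R).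
  by field; have ht : (0:R) <= t%:R by []; apply/negP => /eqP; lra.
rewrite normrN normrM normfV (gtr0_norm T0) ltr_pdivrMr //.
have aS : `|Sv| < a k t.
  have hn := real_normK (num_real Sv); rewrite -hn in HS.
  have hS : 0 <= `|Sv| by [].
  move: hS HS; move: (`|Sv|) => z hz; nra.
apply: (lt_trans aS); rewrite /a [X in _ < X]mulrC ltr_pM2l //.
Qed.
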